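(* Let $Q\in\mathbb R^{3\times3}$ be symmetric positive semi-definite with eigenvalues $\lambda_1^Q,\lambda_2^Q,\lambda_3^Q$, let $\mathbb U\subset\mathbb S^2$ be a finite set, and let $\Delta_Q^*:=\min_{v\in\mathcal E(Q)}\max_{u\in\mathbb U}\Delta_Q(u,v)$ with $\Delta_Q(u,v)=u^\top\big((\mathrm{tr}(Q)-2v^\top Qv)I_3-Q+2Qvv^\top\big)u$. (1) If $\mathbb U$ contains an orthonormal basis of $\mathbb R^3$ consisting of eigenvectors of $Q$, then: if $\lambda_1^Q=\lambda_2^Q=\lambda_3^Q>0$, $\Delta_Q^*\ge\frac23\lambda_1^Q$; if $\lambda_1^Q=\lambda_2^Q\ne\lambda_3^Q$ (with $\lambda_3^Q>0$), $\Delta_Q^*\ge\min\{\lambda_1^Q+\lambda_2^Q,\lambda_3^Q\}$; if the three eigenvalues are pairwise distinct, $\Delta_Q^*\ge\mathrm{tr}(Q)-\lambda_{\max}^Q$. (2) If $\mathrm{tr}(Q)-2\lambda_{\max}^Q>0$ and $\mathbb U$ contains some three mutually orthogonal unit vectors, then $\Delta_Q^*\ge\frac23(\mathrm{tr}(Q)-2\lambda_{\max}^Q)$.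
   Context: $\mathbb S^2$ is the set of unit vectors in $\mathbb R^3$. $\mathcal E(Q)$ denotes the set of all unit eigenvectors of $Q$. $\lambda_{\max}^Q$ is the largest eigenvalue of $Q$. *)

(* Defs.v *)
From HB Require Import structures.
From mathcomp Require Import all_boot all_order all_algebra.
Set Implicit Arguments. Unset Strict Implicit. Unset Printing Implicit Defensive.
Import Order.TTheory GRing.Theory Num.Theory.
Local Open Scope ring_scope.

Definition dotv (R : rcfType) (x y : 'cV[R]_3) : R := (x^T *m y) 0 0.

Definition unitv (R : rcfType) (x : 'cV[R]_3) : Prop := dotv x x = 1.

Definition symmetric_mx (R : rcfType) (Q : 'M[R]_3) : Prop := Q^T = Q.

Definition psd_mx (R : rcfType) (Q : 'M[R]_3) : Prop :=
  forall x : 'cV[R]_3, 0 <= dotv x (Q *m x).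

Definition unit_eigvec (R : rcfType) (Q : 'M[R]_3) (v : 'cV[R]_3) : Prop :=
  unitv v /\ exists a : R, Q *m v = a *: v.

Definition DeltaQ (R : rcfType) (Q : 'M[R]_3) (u v : 'cV[R]_3) : R :=
  dotv u (((\tr Q - 2 * dotv v (Q *m v))%:M - Q + 2 *: (Q *m v *m v^T)) *m u).

(* maximum of f over a (nonempty) finite list s; 0 on the empty list *)
Definition maxseq (R : rcfType) (T : Type) (f : T -> R) (s : seq T) : R :=
  match s with
  | [::] => 0
  | x :: s' => \big[Num.max/f x]_(y <- s') f y
  end.

Definition maxDelta (R : rcfType) (Q : 'M[R]_3) (U : seq 'cV[R]_3) (v : 'cV[R]_3) : R :=
  maxseq (fun u => DeltaQ Q u v) U.

(* Delta_Q^* >= c, where Delta_Q^* = min_{v in E(Q)} max_{u in U} Delta_Q(u,v) *)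
Definition DeltaStar_ge (R : rcfType) (Q : 'M[R]_3) (U : seq 'cV[R]_3) (c : R) : Prop :=
  forall v, unit_eigvec Q v -> c <= maxDelta Q U v.

Definition orthonormal3 (R : rcfType) (e1 e2 e3 : 'cV[R]_3) : Prop :=
  [/\ unitv e1, unitv e2, unitv e3 &
   [/\ dotv e1 e2 = 0, dotv e1 e3 = 0 & dotv e2 e3 = 0]].

(* Main.v *)
Require Import Defs.
From HB Require Import structures.
From mathcomp Require Import all_boot all_order all_algebra ring lra.
Import Order.TTheory GRing.Theory Num.Theory.
Local Open Scope ring_scope.
Set Implicit Arguments. Unset Strict Implicit.
Section S.
Variable R : rcfType.
Implicit Types x y : 'cV[R]_3.
Lemma dotvE x y : dotv x y = \sum_k x k 0 * y k 0.
Proof. by rewrite /dotv !mxE; apply: eq_bigr => k _; rewrite !mxE. Qed.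
Lemma dotvC x y : dotv x y = dotv y x.
Proof. by rewrite !dotvE; apply: eq_bigr => k _; rewrite mulrC. Qed.
Lemma dotvDr x y z : dotv x (y + z) = dotv x y + dotv x z.
Proof. by rewrite !dotvE -big_split; apply: eq_bigr => k _; rewrite !mxE mulrDr. Qed.
Lemma dotvNr x y : dotv x (- y) = - dotv x y.
Proof. by rewrite !dotvE -sumrN; apply: eq_bigr => k _; rewrite !mxE mulrN. Qed.
Lemma dotvZr x y c : dotv x (c *: y) = c * dotv x y.
Proof. by rewrite !dotvE mulr_sumr; apply: eq_bigr => k _; rewrite !mxE mulrCA. Qed.
Lemma sum3 (F : 'I_3 -> R) : \sum_i F i = F ord0 + F (lift ord0 ord0) + F (lift ord0 (lift ord0 ord0)).
Proof. by rewrite !big_ord_recl big_ord0 addr0 addrA. Qed.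
Lemma dotv_sym (Q : 'M[R]_3) x y : Q^T = Q -> dotv x (Q *m y) = dotv (Q *m x) y.
Proof. by move=> HQ; rewrite /dotv trmx_mul HQ mulmxA. Qed.
Lemma mul1x1 (w : 'cV[R]_3) (M : 'M[R]_1) : w *m M = M 0 0 *: w.
Proof. by apply/matrixP => i j; rewrite !mxE big_ord1 (ord1 j) mulrC. Qed.
Lemma dotv0 x : dotv x x = 0 -> x = 0.
Proof.
rewrite dotvE => /psumr_eq0P H.
apply/matrixP => i j; rewrite (ord1 j) mxE.
have Hi := H _ i isT; apply/eqP; rewrite -sqrf_eq0 expr2 Hi //.
by move=> k _; rewrite -expr2 sqr_ge0.
Qed.
Lemma DeltaE (Q : 'M[R]_3) u v a : Q *m v = a *: v -> dotv v v = 1 ->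
  DeltaQ Q u v = (\tr Q - 2 * a) * dotv u u - dotv u (Q *m u) + 2 * a * (dotv u v) ^+ 2.
Proof.
move=> Hv Hvv; rewrite /DeltaQ Hv dotvZr Hvv mulr1.
rewrite mulmxDl mulmxBl mul_scalar_mx -scalemxAl -mulmxA mul1x1.
rewrite !dotvDr dotvNr !dotvZr -/(dotv v u).
rewrite [dotv v u]dotvC. ring.
Qed.
Section Basis.
Variables e1 e2 e3 : 'cV[R]_3.
Hypothesis Hon : orthonormal3 e1 e2 e3.
Let f (i : 'I_3) : 'cV[R]_3 := nth 0 [:: e1; e2; e3] i.
Let E : 'M[R]_3 := \matrix_(i, j) f j i 0.
Lemma ortho_f i j : dotv (f i) (f j) = (i == j)%:R.
Proof.
case: Hon => h1 h2 h3 [h12 h13 h23].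
case: i => [[|[|[|//]]] Hi]; case: j => [[|[|[|//]]] Hj]; rewrite /f /= ?eqE /= //;
  by rewrite ?h1 ?h2 ?h3 ?h12 ?h13 ?h23 // dotvC ?h12 ?h13 ?h23.
Qed.
Lemma EE : E *m E^T = 1%:M.
Proof.
apply: mulmx1C; apply/matrixP => i j.
have -> : (E^T *m E) i j = dotv (f i) (f j).
  by rewrite dotvE !mxE; apply: eq_bigr => k _; rewrite !mxE.
by rewrite ortho_f !mxE.
Qed.
Lemma ETx x i : (E^T *m x) i 0 = dotv (f i) x.
Proof. by rewrite dotvE !mxE; apply: eq_bigr => k _; rewrite !mxE. Qed.
Lemma parseval x y : dotv x y = \sum_i dotv (f i) x * dotv (f i) y.
Proof.
have -> : dotv x y = ((E^T *m x)^T *m (E^T *m y)) 0 0.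
  by rewrite /dotv trmx_mul trmxK !mulmxA -(mulmxA _ E) EE mulmx1.
rewrite !mxE; apply: eq_bigr => i _; by rewrite !mxE -!ETx !mxE.
Qed.
Lemma traceB (Q : 'M[R]_3) : \tr Q = \sum_i dotv (f i) (Q *m f i).
Proof.
have -> : \tr Q = \tr (E^T *m (Q *m E)).
  by rewrite mxtrace_mulC -mulmxA EE mulmx1.
rewrite /mxtrace; apply: eq_bigr => i _.
rewrite dotvE !mxE; apply: eq_bigr => k _; rewrite !mxE; congr (_ * _).
by apply: eq_bigr => l _; rewrite !mxE.
Qed.
End Basis.
Lemma parseval3 e1 e2 e3 x y : orthonormal3 e1 e2 e3 ->
  dotv x y = dotv e1 x * dotv e1 y + dotv e2 x * dotv e2 y + dotv e3 x * dotv e3 y.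
Proof. by move=> H; rewrite (@parseval e1 e2 e3 H) sum3. Qed.
Lemma trace3 e1 e2 e3 (Q : 'M[R]_3) : orthonormal3 e1 e2 e3 ->
  \tr Q = dotv e1 (Q *m e1) + dotv e2 (Q *m e2) + dotv e3 (Q *m e3).
Proof. by move=> H; rewrite (@traceB e1 e2 e3 H) sum3. Qed.
Lemma eig_orth (Q : 'M[R]_3) x y a b : Q^T = Q -> Q *m x = a *: x -> Q *m y = b *: y ->
  a * dotv x y = b * dotv x y.
Proof.
move=> HQ Hx Hy; rewrite -[b * _]dotvZr -Hy dotv_sym // Hx.
by rewrite [dotv (a *: x) y]dotvC dotvZr dotvC.
Qed.
Lemma unit_neq0 x : dotv x x = 1 -> x != 0.
Proof. move=> H; apply/eqP => H0; move: H; rewrite H0 dotvE big1 => [|k _]; last by rewrite mxE mul0r.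
by move/eqP; rewrite eq_sym oner_eq0. Qed.
Lemma root_of_eig (Q : 'M[R]_3) v a : Q^T = Q -> dotv v v = 1 -> Q *m v = a *: v ->
  root (char_poly Q) a.
Proof.
move=> HQ Hv Hav; rewrite -eigenvalue_root_char; apply/eigenvalueP.
exists v^T.
  by rewrite -HQ -trmx_mul Hav linearZ.
by rewrite trmx_eq0 unit_neq0.
Qed.
Lemma exists_eigvec (Q : 'M[R]_3) l : Q^T = Q -> root (char_poly Q) l ->
  exists x, x != 0 /\ Q *m x = l *: x.
Proof.
move=> HQ; rewrite -eigenvalue_root_char => /eigenvalueP [w Hw Hw0].
exists w^T; split; first by rewrite trmx_eq0.
by rewrite -HQ -trmx_mul Hw linearZ.
Qed.
Lemma in_mu (Q : 'M[R]_3) e1 e2 e3 m1 m2 m3 x b : orthonormal3 e1 e2 e3 -> Q^T = Q ->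
  Q *m e1 = m1 *: e1 -> Q *m e2 = m2 *: e2 -> Q *m e3 = m3 *: e3 ->
  x != 0 -> Q *m x = b *: x -> [\/ b = m1, b = m2 | b = m3].
Proof.
move=> Hon HQ H1 H2 H3 Hx0 Hx.
have c1 := eig_orth HQ H1 Hx; have c2 := eig_orth HQ H2 Hx; have c3 := eig_orth HQ H3 Hx.
have [->|n1] := eqVneq b m1; first by constructor 1.
have [->|n2] := eqVneq b m2; first by constructor 2.
have [->|n3] := eqVneq b m3; first by constructor 3.
have z : forall m c, m * c = b * c -> m != b -> c = 0.
  move=> m c Hc Hm; apply/eqP; move/eqP: Hc; rewrite -subr_eq0 -mulrBl mulf_eq0 subr_eq0.
  by rewrite (negbTE Hm).
have := parseval3 x x Hon.
rewrite (z _ _ c1) ?(eq_sym m1) // (z _ _ c2) ?(eq_sym m2) // (z _ _ c3) ?(eq_sym m3) //.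
by rewrite !mul0r !addr0 => /dotv0 H0; rewrite H0 eqxx in Hx0.
Qed.
Lemma trace_roots (Q : 'M[R]_3) l1 l2 l3 :
  char_poly Q = ('X - l1%:P) * ('X - l2%:P) * ('X - l3%:P) -> \tr Q = l1 + l2 + l3.
Proof.
move=> HC; have := @char_poly_trace _ _ Q isT; rewrite HC.
have -> : ('X - l1%:P) * ('X - l2%:P) * ('X - l3%:P) =
   'X^3 - (l1 + l2 + l3)%:P * 'X^2 + (l1 * l2 + l1 * l3 + l2 * l3)%:P * 'X - (l1 * l2 * l3)%:P :> {poly R}.
  rewrite !polyCD !polyCM; ring.
rewrite coefB coefD coefB coefXn !coefCM coefXn coefX coefC /=.
move=> H; rewrite -[\tr Q]opprK -H; ring.
Qed.
Lemma maxseq_ge (T : eqType) (f : T -> R) s u : u \in s -> f u <= maxseq f s.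
Proof.
case: s => [//|x s] /=.
have H : forall s', f x <= \big[Num.max/f x]_(y <- s') f y /\ forall t : T, t \in s' -> f t <= \big[Num.max/f x]_(y <- s') f y.
  elim=> [|z s' [IH1 IH2]]; first by rewrite big_nil; split=> // y.
  rewrite big_cons; split; first by rewrite le_max IH1 orbT.
  move=> y; rewrite inE => /orP [/eqP ->|Hy]; first by rewrite le_max lexx.
  by rewrite le_max IH2 ?orbT.
rewrite inE => /orP [/eqP ->|Hu]; first by case: (H s).
by case: (H s) => _; apply.
Qed.
Lemma zero_of (m a c : R) : m * c = a * c -> m != a -> c = 0.
Proof.
move=> Hc Hm; apply/eqP; move/eqP: Hc; rewrite -subr_eq0 -mulrBl mulf_eq0 subr_eq0.
by rewrite (negbTE Hm).
Qed.
Lemma core1b (T p q a m c1 c2 c3 : R) : T = p + p + q -> p != q -> (a = p \/ a = q) ->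
  p * c1 = a * c1 -> p * c2 = a * c2 -> q * c3 = a * c3 -> c1^+2 + c2^+2 + c3^+2 = 1 ->
  T - 2 * a - p + 2 * a * c1^+2 <= m ->
  T - 2 * a - p + 2 * a * c2^+2 <= m ->
  T - 2 * a - q + 2 * a * c3^+2 <= m -> Num.min (p + p) q <= m.
Proof.
move=> hT pq [->|->] h1 h2 h3 hs d1 d2 d3; rewrite ge_min; apply/orP.
- right; rewrite (zero_of h3) ?(eq_sym q) // in hs d3.
  have e : p * c1 ^+ 2 + p * c2 ^+ 2 = p.
    by rewrite -mulrDr; move: hs; rewrite expr0n /= addr0 => ->; rewrite mulr1.
  lra.
- left; rewrite (zero_of h1) // (zero_of h2) // in hs.
  move: hs; rewrite expr0n /= !add0r => hs; rewrite hs in d3. lra.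
Qed.
Lemma core1c (T L a m m2 m3 c1 c2 c3 : R) : m2 != a -> m3 != a ->
  m2 * c2 = a * c2 -> m3 * c3 = a * c3 -> c1^+2 + c2^+2 + c3^+2 = 1 ->
  T - 2 * a - a + 2 * a * c1^+2 <= m -> a <= L -> T - L <= m.
Proof.
move=> n2 n3 h2 h3 hs d1 hL.
rewrite (zero_of h2) // (zero_of h3) // expr0n /= !addr0 in hs.
rewrite hs in d1; lra.
Qed.
Lemma distinct3 (m1 m2 m3 l1 l2 l3 : R) : [&& l1 != l2, l1 != l3 & l2 != l3] ->
  [\/ l1 = m1, l1 = m2 | l1 = m3] -> [\/ l2 = m1, l2 = m2 | l2 = m3] ->
  [\/ l3 = m1, l3 = m2 | l3 = m3] -> [&& m1 != m2, m1 != m3 & m2 != m3].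
Proof.
move=> H h1 h2 h3; move: H; case: h1 => ->; case: h2 => ->; case: h3 => ->; rewrite ?eqxx ?andbF ?andFb //;
  by case/and3P => ? ? ?; apply/and3P; split; try done; rewrite eq_sym.
Qed.
End S.

Unset Implicit Arguments.
Theorem lemma2 (R : rcfType) (Q : 'M[R]_3) (l1 l2 l3 : R) (U : seq 'cV[R]_3) :
  symmetric_mx Q -> psd_mx Q ->
  char_poly Q = ('X - l1%:P) * ('X - l2%:P) * ('X - l3%:P) ->
  let lmax := Num.max l1 (Num.max l2 l3) in
  (* (1) U contains an orthonormal eigenbasis of Q *)
  ((exists e1 e2 e3, [/\ e1 \in U, e2 \in U & e3 \in U] /\ orthonormal3 e1 e2 e3 /\
       [/\ unit_eigvec Q e1, unit_eigvec Q e2 & unit_eigvec Q e3]) ->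
     [/\ (l1 = l2 /\ l2 = l3 /\ 0 < l1 -> DeltaStar_ge Q U (2 / 3 * l1)),
         (l1 = l2 /\ l2 != l3 /\ 0 < l3 -> DeltaStar_ge Q U (Num.min (l1 + l2) l3)) &
         ([/\ l1 != l2, l1 != l3 & l2 != l3] -> DeltaStar_ge Q U (\tr Q - lmax))])
  /\
  (* (2) *)
  (0 < \tr Q - 2 * lmax ->
   (exists e1 e2 e3, [/\ e1 \in U, e2 \in U & e3 \in U] /\ orthonormal3 e1 e2 e3) ->
   DeltaStar_ge Q U (2 / 3 * (\tr Q - 2 * lmax))).
Proof.
move=> HS _ HC lmax.
have HT := trace_roots HC.
have Hr : forall b, root (char_poly Q) b -> [\/ b = l1, b = l2 | b = l3].
  move=> b; rewrite HC !rootM !root_XsubC => /orP [/orP [/eqP->|/eqP->]|/eqP->];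
  by [constructor 1 | constructor 2 | constructor 3].
have Hle : forall b, root (char_poly Q) b -> b <= lmax.
  by move=> b /Hr [->|->|->]; rewrite /lmax !le_max lexx ?orbT.
have Dm : forall e v a, e \in U -> dotv e e = 1 -> dotv v v = 1 -> Q *m v = a *: v ->
    \tr Q - 2 * a - dotv e (Q *m e) + 2 * a * (dotv e v) ^+ 2 <= maxDelta Q U v.
  move=> e v a He Hee Hv Ha.
  have -> : \tr Q - 2 * a - dotv e (Q *m e) + 2 * a * (dotv e v) ^+ 2 = DeltaQ Q e v.
    by rewrite (DeltaE _ Ha Hv) Hee mulr1.
  exact: (maxseq_ge (fun u => DeltaQ Q u v) He).
have avg : forall e1 e2 e3 v a, [/\ e1 \in U, e2 \in U & e3 \in U] -> orthonormal3 e1 e2 e3 ->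
    dotv v v = 1 -> Q *m v = a *: v -> 2 * \tr Q - 4 * a <= 3 * maxDelta Q U v.
  move=> e1 e2 e3 v a [i1 i2 i3] Hon Hv Ha.
  have Hon' := Hon; case: Hon' => u1 u2 u3 _.
  have d1 := Dm _ _ _ i1 u1 Hv Ha; have d2 := Dm _ _ _ i2 u2 Hv Ha; have d3 := Dm _ _ _ i3 u3 Hv Ha.
  have Hs := parseval3 v v Hon; have Ht := trace3 Q Hon.
  rewrite Hv -!expr2 in Hs.
  have key : 2 * a * (dotv e1 v ^+ 2 + dotv e2 v ^+ 2 + dotv e3 v ^+ 2) = 2 * a by rewrite -Hs mulr1.
  lra.
split; last first.
  move=> _ [e1 [e2 [e3 [Hin Hon]]]] v [Hv [a Ha]].
  have := avg _ _ _ _ _ Hin Hon Hv Ha.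
  have := Hle _ (root_of_eig HS Hv Ha).
  lra.
move=> [e1 [e2 [e3 [Hin [Hon [[u1 [m1 H1]] [u2 [m2 H2]] [u3 [m3 H3]]]]]]]].
have Ht := trace3 Q Hon.
rewrite H1 H2 H3 !dotvZr u1 u2 u3 !mulr1 in Ht.
have Hin' := Hin; case: Hin' => i1 i2 i3.
have q1 : dotv e1 (Q *m e1) = m1 by rewrite H1 dotvZr u1 mulr1.
have q2 : dotv e2 (Q *m e2) = m2 by rewrite H2 dotvZr u2 mulr1.
have q3 : dotv e3 (Q *m e3) = m3 by rewrite H3 dotvZr u3 mulr1.
split.
- move=> [e12 [e23 _]] v [Hv [a Ha]].
  have := avg _ _ _ _ _ Hin Hon Hv Ha.
  have : a = l1 by case: (Hr _ (root_of_eig HS Hv Ha)) => ->; rewrite -?e23 -?e12.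
  lra.
- move=> [e12 [n23 _]] v [Hv [a Ha]].
  have d1 := Dm _ _ _ i1 u1 Hv Ha; have d2 := Dm _ _ _ i2 u2 Hv Ha; have d3 := Dm _ _ _ i3 u3 Hv Ha.
  rewrite q1 in d1; rewrite q2 in d2; rewrite q3 in d3.
  have Hs := parseval3 v v Hon; rewrite Hv -!expr2 in Hs; move/esym: Hs => Hs.
  have o1 := eig_orth HS H1 Ha; have o2 := eig_orth HS H2 Ha; have o3 := eig_orth HS H3 Ha.
  have hT : \tr Q = l2 + l2 + l3 by rewrite HT e12.
  have ha : a = l2 \/ a = l3 by case: (Hr _ (root_of_eig HS Hv Ha)) => ->; rewrite ?e12; [left|left|right].
  have r1 : m1 = l2 \/ m1 = l3 by case: (Hr _ (root_of_eig HS u1 H1)) => ->; rewrite ?e12; [left|left|right].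
  have r2 : m2 = l2 \/ m2 = l3 by case: (Hr _ (root_of_eig HS u2 H2)) => ->; rewrite ?e12; [left|left|right].
  have r3 : m3 = l2 \/ m3 = l3 by case: (Hr _ (root_of_eig HS u3 H3)) => ->; rewrite ?e12; [left|left|right].
  rewrite e12.
  case: r1 => E1; case: r2 => E2; case: r3 => E3; rewrite ?E1 ?E2 ?E3 in Ht d1 d2 d3 o1 o2 o3;
    try (exfalso; move/eqP: n23; apply; lra).
  + exact: (core1b hT n23 ha o1 o2 o3 Hs d1 d2 d3).
  + have Hs' : dotv e1 v ^+ 2 + dotv e3 v ^+ 2 + dotv e2 v ^+ 2 = 1 by rewrite -Hs; ring.
    exact: (core1b hT n23 ha o1 o3 o2 Hs' d1 d3 d2).
  + have Hs' : dotv e2 v ^+ 2 + dotv e3 v ^+ 2 + dotv e1 v ^+ 2 = 1 by rewrite -Hs; ring.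
    exact: (core1b hT n23 ha o2 o3 o1 Hs' d2 d3 d1).
- move=> [n12 n13 n23] v [Hv [a Ha]].
  have d1 := Dm _ _ _ i1 u1 Hv Ha; have d2 := Dm _ _ _ i2 u2 Hv Ha; have d3 := Dm _ _ _ i3 u3 Hv Ha.
  rewrite q1 in d1; rewrite q2 in d2; rewrite q3 in d3.
  have Hs := parseval3 v v Hon; rewrite Hv -!expr2 in Hs; move/esym: Hs => Hs.
  have o1 := eig_orth HS H1 Ha; have o2 := eig_orth HS H2 Ha; have o3 := eig_orth HS H3 Ha.
  have hL := Hle _ (root_of_eig HS Hv Ha).
  have inl : forall l, root (char_poly Q) l -> [\/ l = m1, l = m2 | l = m3].
    move=> l /(exists_eigvec HS) [x [x0 Hx]].
    exact: (in_mu Hon HS H1 H2 H3 x0 Hx).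
  have r1 : root (char_poly Q) l1 by rewrite HC !rootM !root_XsubC eqxx.
  have r2 : root (char_poly Q) l2 by rewrite HC !rootM !root_XsubC eqxx ?orbT.
  have r3 : root (char_poly Q) l3 by rewrite HC !rootM !root_XsubC eqxx ?orbT.
  have /and3P [n'12 n'13 n'23] := distinct3 (introT and3P (And3 n12 n13 n23)) (inl _ r1) (inl _ r2) (inl _ r3).
  case: (in_mu Hon HS H1 H2 H3 (unit_neq0 Hv) Ha) => ea; subst a.
  + have n21 : m2 != m1 by rewrite eq_sym.
    have n31 : m3 != m1 by rewrite eq_sym.
    exact: (core1c n21 n31 o2 o3 Hs d1 hL).
  + have n32 : m3 != m2 by rewrite eq_sym.
    have Hs' : dotv e2 v ^+ 2 + dotv e1 v ^+ 2 + dotv e3 v ^+ 2 = 1 by rewrite -Hs; ring.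
    exact: (core1c n'12 n32 o1 o3 Hs' d2 hL).
  + have Hs' : dotv e3 v ^+ 2 + dotv e1 v ^+ 2 + dotv e2 v ^+ 2 = 1 by rewrite -Hs; ring.
    exact: (core1c n'13 n'23 o1 o2 Hs' d3 hL).
Qed.
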